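(* Let $N=2$ with $r_{11}=1$ and $g\in(-2,2)$, $h=\sqrt{1-g^2/4}$. The length of the Finsleroid Indicatrix $\{R:K(g;R)=1\}$, measured with the Finsler metric, i.e. $L=\oint\sqrt{g_{pq}(g;R)\,dR^p\,dR^q}$ taken once around the closed curve, equals $$L=\frac{2\pi}{h}.$$ Consequently $L\ge 2\pi$, with $L=2\pi$ if and only if $g=0$, and $L\to\infty$ as $|g|\to2$.
   Context: Here $V_2=\mathbb{R}^2$ with points $R=(R^1,R^2)$, $Z=R^2$, $q(R)=|R^1|$; $G=g/h$. Define $B(g;R)=Z^2+gqZ+q^2$, $A(g;R)=Z+\frac12 gq$, $\Phi(g;R)=\arctan\big(A/(hq)\big)$ if $q>0$, $\Phi=\pi/2$ if $q=0,Z>0$, $\Phi=-\pi/2$ if $q=0,Z<0$; $J(g;R)=e^{\frac12 G\Phi}$ and the Finsleroid metric function $K(g;R)=\sqrt{B(g;R)}\,J(g;R)$ ($K(g;0)=0$). The Finsler metric tensor is $g_{pq}(g;R)=\frac12\,\partial^2K^2/\partial R^p\partial R^q$. *)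

(* Defs.v *)
From Stdlib Require Import Reals Lra.
From Coquelicot Require Import Coquelicot.
Open Scope R_scope.

(* N = 2, r_11 = 1.  A point R = (R^1, R^2) is written as two reals x, y. *)

Definition hF (g : R) : R := sqrt (1 - g ^ 2 / 4).
Definition GF (g : R) : R := g / hF g.

(* Z = R^2, q(R) = |R^1| *)
Definition qF (x : R) : R := Rabs x.

Definition BF (g x y : R) : R := y ^ 2 + g * qF x * y + (qF x) ^ 2.
Definition AF (g x y : R) : R := y + / 2 * g * qF x.

(* Phi; the case q = 0, Z = 0 (the origin) is irrelevant since K(g;0)=0. *)
Definition PhiF (g x y : R) : R :=
  if Rlt_dec 0 (qF x) then atan (AF g x y / (hF g * qF x))
  else if Rlt_dec 0 y then PI / 2 else - (PI / 2).

Definition JF (g x y : R) : R := exp (/ 2 * GF g * PhiF g x y).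

Definition KF (g x y : R) : R :=
  if Req_EM_T x 0 then (if Req_EM_T y 0 then 0 else sqrt (BF g x y) * JF g x y)
  else sqrt (BF g x y) * JF g x y.

Definition K2F (g x y : R) : R := (KF g x y) ^ 2.

Definition partial (p : nat) (f : R -> R -> R) (x y : R) : R :=
  match p with
  | 1%nat => Derive (fun t => f t y) x
  | _ => Derive (fun t => f x t) y
  end.

Definition gmet (g : R) (p q : nat) (x y : R) : R :=
  / 2 * partial p (partial q (K2F g)) x y.

Definition gquad (g x y v1 v2 : R) : R :=
  gmet g 1 1 x y * v1 * v1 + gmet g 1 2 x y * v1 * v2
  + gmet g 2 1 x y * v2 * v1 + gmet g 2 2 x y * v2 * v2.

Definition indicatrix_loop (g : R) (c1 c2 : R -> R) : Prop :=
  (forall t, 0 <= t <= 1 ->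
     ex_derive c1 t /\ ex_derive c2 t /\
     continuous (Derive c1) t /\ continuous (Derive c2) t) /\
  (forall t, 0 <= t <= 1 -> KF g (c1 t) (c2 t) = 1) /\
  (forall x y, KF g x y = 1 -> exists t, 0 <= t <= 1 /\ c1 t = x /\ c2 t = y) /\
  c1 0 = c1 1 /\ c2 0 = c2 1 /\
  (forall s t, 0 <= s < 1 -> 0 <= t < 1 -> c1 s = c1 t -> c2 s = c2 t -> s = t).

Definition finsler_length_is (g : R) (c1 c2 : R -> R) (L : R) : Prop :=
  is_RInt (fun t => sqrt (gquad g (c1 t) (c2 t) (Derive c1 t) (Derive c2 t))) 0 1 L.

(* Main.v *)
Require Import Defs.
From Stdlib Require Import Reals Lra Classical.
From Coquelicot Require Import Coquelicot.
Open Scope R_scope.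


Lemma s_cases s : s*s = 1 -> s = 1 \/ s = -1.
Proof. intros H. assert ((s-1)*(s+1) = 0) by nra. apply Rmult_integral in H0. lra. Qed.

Lemma Bpos g s x y : -2 < g < 2 -> s*s = 1 -> x <> 0 -> 0 < y*y + g*s*x*y + x*x.
Proof. intros. assert (0 < x*x) by (apply Rsqr_pos_lt in H1; unfold Rsqr in H1; lra).
 assert (0 < (4 - g*g)*(x*x)) by (apply Rmult_lt_0_compat; [assert (0<(2-g)*(2+g)) by (apply Rmult_lt_0_compat; lra); nra | lra]).
 pose proof (Rle_0_sqr (y + g*s*x/2)) as Hq; unfold Rsqr in Hq.
 destruct (s_cases s H0) as [->| ->]; nra. Qed.

Lemma param g h : -2 < g -> 0 < h -> h*h = 1 - g*g/4 ->
  exists t, 0 < t /\ g = 2*(1-t*t)/(1+t*t) /\ h = 2*t/(1+t*t).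
Proof. intros Hg Hh H. exists (2*h/(2+g)). split. apply Rdiv_lt_0_compat; lra.
 split; field_simplify_eq; try lra; try nra.
 all: try (split; try lra; nra).
Qed.

Ltac hpar g h := let t := fresh "t" in let Ht := fresh "Ht" in
  match goal with Hg : -2 < g < 2, Hh : 0 < h, H2 : h*h = 1 - g*g/4 |- _ =>
   destruct (param g h (proj1 Hg) Hh H2) as [t [Ht [? ?]]]; subst g h end.

Lemma hF_pos g : -2 < g < 2 -> 0 < hF g.
Proof. intros. unfold hF. apply sqrt_lt_R0.
 assert (0<(2-g)*(2+g)) by (apply Rmult_lt_0_compat; lra). nra. Qed.

Lemma hF_sq g : -2 < g < 2 -> hF g * hF g = 1 - g*g/4.
Proof. intros. unfold hF. rewrite sqrt_sqrt; [field|].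
 assert (0<(2-g)*(2+g)) by (apply Rmult_lt_0_compat; lra). nra. Qed.

Lemma GF_h g : -2 < g < 2 -> GF g * hF g = g.
Proof. intros. unfold GF. field. apply Rgt_not_eq, hF_pos; auto. Qed.

Lemma hF_le1 g : -2 < g < 2 -> hF g <= 1.
Proof. intros. pose proof (hF_pos g H). pose proof (hF_sq g H).
 assert (0 <= g*g) by nra. nra. Qed.

Lemma easy_ineq g : -2 < g < 2 -> 2 * PI / hF g >= 2 * PI.
Proof. intros. pose proof (hF_pos g H). pose proof (hF_le1 g H). pose proof PI_RGT_0.
 apply Rle_ge. unfold Rdiv. rewrite <- (Rmult_1_r (2*PI)) at 1.
 apply Rmult_le_compat_l. lra. rewrite <- Rinv_1. apply Rinv_le_contravar; lra. Qed.

Lemma easy_iff g : -2 < g < 2 -> (2 * PI / hF g = 2 * PI <-> g = 0).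
Proof. intros. pose proof (hF_pos g H). pose proof (hF_sq g H). pose proof PI_RGT_0. split.
 - intros E. assert (hF g = 1). { apply (f_equal (fun z => z * hF g / (2*PI))) in E.
     field_simplify in E; lra. }
   rewrite H3 in H1. nra.
 - intros ->. assert (Hh1 : hF 0 = 1). { unfold hF. replace (1 - 0^2/4) with 1 by (simpl; field). apply sqrt_1. }
   rewrite Hh1. field.
Qed.

Lemma lim_core K : 0 < K -> exists d, 0 < d /\ forall y, (0 < 2 - y < d \/ 0 < 2 + y < d) -> K < 2*PI/hF y.
Proof. intros HK. pose proof PI_RGT_0. set (a := 2*PI/K).
 assert (Ha : 0 < a) by (unfold a; apply Rdiv_lt_0_compat; lra).
 exists (Rmin 1 (a*a)). split. apply Rmin_pos; nra.
 intros y Hy. assert (Hd1 := Rmin_l 1 (a*a)). assert (Hd2 := Rmin_r 1 (a*a)).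
 assert (Hg : -2 < y < 2) by lra.
 pose proof (hF_pos y Hg) as Hp.
 assert (hF y < a). { unfold hF. rewrite <- (sqrt_square a) by lra. apply sqrt_lt_1_alt. split.
   assert (0<(2-y)*(2+y)) by (apply Rmult_lt_0_compat; lra). nra.
   destruct Hy as [Hy|Hy]; nra. }
 unfold a in H0. apply (Rmult_lt_compat_r (K / hF y)) in H0.
 replace (hF y * (K / hF y)) with K in H0 by (field; lra).
 replace (2 * PI / K * (K / hF y)) with (2*PI/hF y) in H0 by (field; lra). exact H0.
 apply Rdiv_lt_0_compat; lra.
Qed.

Lemma lim_left : filterlim (fun g => 2 * PI / hF g) (at_left 2) (Rbar_locally p_infty).
Proof. intros P [M HM]. destruct (lim_core (Rmax M 1)) as [d [Hd Hc]].
 apply Rlt_le_trans with 1; [lra | apply Rmax_r].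
 exists (mkposreal d Hd). intros y Hb Hy. apply HM.
 apply Rle_lt_trans with (Rmax M 1). apply Rmax_l. apply Hc. left.
 change (Rabs (y - 2) < d) in Hb. apply Rabs_def2 in Hb. lra.
Qed.

Lemma lim_right : filterlim (fun g => 2 * PI / hF g) (at_right (-2)) (Rbar_locally p_infty).
Proof. intros P [M HM]. destruct (lim_core (Rmax M 1)) as [d [Hd Hc]].
 apply Rlt_le_trans with 1; [lra | apply Rmax_r].
 exists (mkposreal d Hd). intros y Hb Hy. apply HM.
 apply Rle_lt_trans with (Rmax M 1). apply Rmax_l. apply Hc. right.
 change (Rabs (y - -2) < d) in Hb. apply Rabs_def2 in Hb. lra.
Qed.

Definition Bs g s x y := y*y + g*s*x*y + x*x.
Definition Th g h s x y := atan ((y + /2*g*(s*x)) / (h*(s*x))).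
Definition Es g h G s x y := exp (G * Th g h s x y).
Definition Qs g h G s x y := Bs g s x y * Es g h G s x y.
Definition Ex g h G s x y := - (Es g h G s x y * g * s * y / Bs g s x y).
Definition Ey g h G s x y := Es g h G s x y * g * s * x / Bs g s x y.
Definition Qx g h G s x y := 2 * x * Es g h G s x y.
Definition Qy g h G s x y := 2 * (y + g*s*x) * Es g h G s x y.
Definition Qxx g h G s x y := 2 * Es g h G s x y + 2 * x * Ex g h G s x y.
Definition Qxy g h G s x y := 2 * x * Ey g h G s x y.
Definition Qyx g h G s x y := 2 * g * s * Es g h G s x y + 2 * (y + g*s*x) * Ex g h G s x y.
Definition Qyy g h G s x y := 2 * Es g h G s x y + 2 * (y + g*s*x) * Ey g h G s x y.

Lemma is_derive_eq (f : R -> R) (x l l' : R) : is_derive f x l -> l = l' -> is_derive f x l'.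
Proof. intros H ->. exact H. Qed.

Definition HYP g h G s := -2 < g < 2 /\ 0 < h /\ h*h = 1 - g*g/4 /\ G*h = g /\ s*s = 1.
Ltac hyp := match goal with H : HYP _ _ _ _ |- _ => destruct H as (Hg & Hh & Hh2 & HG & Hs) end.

Lemma dTh_x g h G s x y : HYP g h G s -> 0 < s*x -> is_derive (fun r => Th g h s r y) x (- h * s * y / Bs g s x y).
Proof. intros HY Hx. hyp. unfold Th, Bs.
assert (HB := Bpos g s x y Hg Hs ltac:(nra)).
auto_derive. nra. 
destruct (s_cases s Hs) as [-> | ->]; field_simplify_eq; try (repeat split; nra).
all: clear HG; hpar g h; field; nra.
Qed.

Lemma dTh_y g h G s x y : HYP g h G s -> 0 < s*x -> is_derive (fun r => Th g h s x r) y (h * s * x / Bs g s x y).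
Proof. intros HY Hx. hyp. unfold Th, Bs.
assert (HB := Bpos g s x y Hg Hs ltac:(nra)).
auto_derive. nra. 
destruct (s_cases s Hs) as [-> | ->]; field_simplify_eq; try (repeat split; nra).
all: clear HG; hpar g h; field; nra.
Qed.

Lemma dE_x g h G s x y : HYP g h G s -> 0 < s*x -> is_derive (fun r => Es g h G s r y) x (Ex g h G s x y).
Proof. intros HY Hx. hyp. unfold Es. 
 apply is_derive_eq with (scal (G * (- h * s * y / Bs g s x y)) (exp (G * Th g h s x y))).
 apply (is_derive_comp exp (fun r => G * Th g h s r y)). apply is_derive_exp.
 apply is_derive_scal. apply (dTh_x g h G s); repeat split; try lra; auto.
 unfold Ex, Es, scal; simpl; unfold mult; simpl. rewrite <- HG. field.
 apply Rgt_not_eq, Bpos; auto; nra.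
Qed.

Lemma dE_y g h G s x y : HYP g h G s -> 0 < s*x -> is_derive (fun r => Es g h G s x r) y (Ey g h G s x y).
Proof. intros HY Hx. hyp. unfold Es. 
 apply is_derive_eq with (scal (G * (h * s * x / Bs g s x y)) (exp (G * Th g h s x y))).
 apply (is_derive_comp exp (fun r => G * Th g h s x r)). apply is_derive_exp.
 apply is_derive_scal. apply (dTh_y g h G s); repeat split; try lra; auto.
 unfold Ey, Es, scal; simpl; unfold mult; simpl. rewrite <- HG. field.
 apply Rgt_not_eq, Bpos; auto; nra.
Qed.

Lemma dmul (f k : R -> R) x df dk : is_derive f x df -> is_derive k x dk ->
  is_derive (fun r => f r * k r) x (df * k x + f x * dk).
Proof. intros H1 H2. apply (is_derive_mult f k x df dk H1 H2). intros; apply Rmult_comm. Qed.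

Lemma dQ_x g h G s x y : HYP g h G s -> 0 < s*x -> is_derive (fun r => Qs g h G s r y) x (Qx g h G s x y).
Proof. intros HY Hx. unfold Qs.
 apply is_derive_eq with ((g*s*y + 2*x) * Es g h G s x y + Bs g s x y * Ex g h G s x y).
 apply (dmul (fun r => Bs g s r y) (fun r => Es g h G s r y)). unfold Bs. auto_derive; try ring; auto. apply dE_x; auto.
 hyp. unfold Qx, Ex. field. apply Rgt_not_eq, Bpos; auto; nra.
Qed.

Lemma dQ_y g h G s x y : HYP g h G s -> 0 < s*x -> is_derive (fun r => Qs g h G s x r) y (Qy g h G s x y).
Proof. intros HY Hx. unfold Qs.
 apply is_derive_eq with ((2*y + g*s*x) * Es g h G s x y + Bs g s x y * Ey g h G s x y).
 apply (dmul (fun r => Bs g s x r) (fun r => Es g h G s x r)). unfold Bs. auto_derive; try ring; auto. apply dE_y; auto.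
 hyp. unfold Qy, Ey. field. apply Rgt_not_eq, Bpos; auto; nra.
Qed.

Lemma dQx_x g h G s x y : HYP g h G s -> 0 < s*x -> is_derive (fun r => Qx g h G s r y) x (Qxx g h G s x y).
Proof. intros HY Hx. unfold Qx, Qxx.
 apply is_derive_eq with (2 * Es g h G s x y + 2 * x * Ex g h G s x y).
 apply is_derive_eq with (2 * Es g h G s x y + (2 * x) * Ex g h G s x y).
 apply (dmul (fun r => 2 * r) (fun r => Es g h G s r y)). auto_derive; try ring; auto. apply dE_x; auto.
 ring. ring.
Qed.

Lemma dQx_y g h G s x y : HYP g h G s -> 0 < s*x -> is_derive (fun r => Qx g h G s x r) y (Qxy g h G s x y).
Proof. intros HY Hx. unfold Qx, Qxy. apply is_derive_scal. apply dE_y; auto. Qed.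

Lemma dQy_x g h G s x y : HYP g h G s -> 0 < s*x -> is_derive (fun r => Qy g h G s r y) x (Qyx g h G s x y).
Proof. intros HY Hx. unfold Qy, Qyx.
 apply is_derive_eq with (2*g*s * Es g h G s x y + (2 * (y + g*s*x)) * Ex g h G s x y).
 apply (dmul (fun r => 2 * (y + g*s*r)) (fun r => Es g h G s r y)). auto_derive; try ring; auto. apply dE_x; auto.
 ring.
Qed.

Lemma dQy_y g h G s x y : HYP g h G s -> 0 < s*x -> is_derive (fun r => Qy g h G s x r) y (Qyy g h G s x y).
Proof. intros HY Hx. unfold Qy, Qyy.
 apply is_derive_eq with (2 * Es g h G s x y + (2 * (y + g*s*x)) * Ey g h G s x y).
 apply (dmul (fun r => 2 * (r + g*s*x)) (fun r => Es g h G s x r)). auto_derive; try ring; auto. apply dE_y; auto.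
 ring.
Qed.

Lemma abs_s s x : s*s = 1 -> 0 < s*x -> Rabs x = s*x.
Proof. intros Hs Hx. destruct (s_cases s Hs) as [-> | ->].
 rewrite Rabs_right; lra. rewrite Rabs_left; lra. Qed.

Lemma HYP_F g s : -2 < g < 2 -> s*s = 1 -> HYP g (hF g) (GF g) s.
Proof. intros. repeat split; try lra. apply hF_pos; auto. apply hF_sq; auto. apply GF_h; auto. Qed.

Lemma BF_eq g s x y : s*s = 1 -> 0 < s*x -> BF g x y = Bs g s x y.
Proof. intros. unfold BF, Bs, qF. rewrite (abs_s s x) by auto. 
 replace ((s*x)^2) with ((s*s)*(x*x)) by ring. rewrite H. ring. Qed.

Lemma K2F_eq g s x y : -2 < g < 2 -> s*s = 1 -> 0 < s*x -> K2F g x y = Qs g (hF g) (GF g) s x y.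
Proof. intros Hg Hs Hx.
 assert (Hx0 : x <> 0) by (intro; subst; lra).
 assert (KF g x y = sqrt (BF g x y) * JF g x y).
 { unfold KF. destruct (Req_EM_T x 0); [contradiction|reflexivity]. }
 unfold K2F. rewrite H. rewrite (BF_eq g s) by auto.
 unfold Qs, JF, Es, PhiF, Th, AF.
 assert (Hq : qF x = s * x) by (apply abs_s; auto). rewrite Hq.
 destruct (Rlt_dec 0 (s*x)); [|lra].
 pose proof (Bpos g s x y Hg Hs Hx0).
 replace ((sqrt (Bs g s x y) * exp (/ 2 * GF g * atan ((y + / 2 * g * (s * x)) / (hF g * (s * x))))) ^ 2)
  with ((sqrt (Bs g s x y) * sqrt (Bs g s x y)) * (exp (/ 2 * GF g * atan ((y + / 2 * g * (s * x)) / (hF g * (s * x))))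
     * exp (/ 2 * GF g * atan ((y + / 2 * g * (s * x)) / (hF g * (s * x)))))) by ring.
 rewrite sqrt_sqrt by (unfold Bs in *; lra). rewrite <- exp_plus. apply f_equal2; [reflexivity| apply f_equal]. field.
Qed.

Lemma loc_pos s x : 0 < s*x -> locally x (fun t => 0 < s*t).
Proof. intros Hx. assert (Hs0 : 0 < Rabs s). { apply Rabs_pos_lt. intro; subst; lra. }
 exists (mkposreal (s*x / Rabs s) (Rdiv_lt_0_compat _ _ Hx Hs0)). intros t Ht.
 change (Rabs (t - x) < s*x / Rabs s) in Ht. simpl in Ht.
 apply (Rmult_lt_compat_r (Rabs s)) in Ht; auto.
 replace (s * x / Rabs s * Rabs s) with (s*x) in Ht by (field; lra).
 rewrite <- Rabs_mult in Ht. apply Rabs_def2 in Ht. nra.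
Qed.

Section G.
Variables (g s x y : R).
Hypotheses (Hg : -2 < g < 2) (Hs : s*s = 1) (Hx : 0 < s*x).
Let h := hF g. Let G := GF g.

Lemma P1 t r : 0 < s*t -> partial 1 (K2F g) t r = Qx g h G s t r.
Proof. intros Ht. simpl. rewrite (Derive_ext_loc _ (fun u => Qs g h G s u r)).
 apply is_derive_unique, dQ_x; auto. apply HYP_F; auto.
 apply (filter_imp (fun u => 0 < s*u)). intros; apply K2F_eq; auto. apply loc_pos; auto. Qed.

Lemma P2 t r : 0 < s*t -> partial 2 (K2F g) t r = Qy g h G s t r.
Proof. intros Ht. simpl. rewrite (Derive_ext _ (fun u => Qs g h G s t u)).
 apply is_derive_unique, dQ_y; auto. apply HYP_F; auto.
 intros; apply K2F_eq; auto. Qed.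

Lemma gm11 : gmet g 1 1 x y = /2 * Qxx g h G s x y.
Proof. unfold gmet. f_equal. simpl. rewrite (Derive_ext_loc _ (fun u => Qx g h G s u y)).
 apply is_derive_unique, dQx_x; auto. apply HYP_F; auto.
 apply (filter_imp (fun u => 0 < s*u)). intros; apply P1; auto. apply loc_pos; auto. Qed.

Lemma gm12 : gmet g 1 2 x y = /2 * Qyx g h G s x y.
Proof. unfold gmet. f_equal. simpl. rewrite (Derive_ext_loc _ (fun u => Qy g h G s u y)).
 apply is_derive_unique, dQy_x; auto. apply HYP_F; auto.
 apply (filter_imp (fun u => 0 < s*u)). intros; apply P2; auto. apply loc_pos; auto. Qed.

Lemma gm21 : gmet g 2 1 x y = /2 * Qxy g h G s x y.
Proof. unfold gmet. f_equal. simpl. rewrite (Derive_ext _ (fun u => Qx g h G s x u)).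
 apply is_derive_unique, dQx_y; auto. apply HYP_F; auto.
 intros; apply P1; auto. Qed.

Lemma gm22 : gmet g 2 2 x y = /2 * Qyy g h G s x y.
Proof. unfold gmet. f_equal. simpl. rewrite (Derive_ext _ (fun u => Qy g h G s x u)).
 apply is_derive_unique, dQy_y; auto. apply HYP_F; auto.
 intros; apply P2; auto. Qed.
End G.

Lemma gquad_alg g s x y v1 v2 E : -2 < g < 2 -> s*s = 1 -> x <> 0 ->
  E * Bs g s x y = 1 ->
  /2 * (2 * E + 2 * x * (- (E * g * s * y / Bs g s x y))) * v1 * v1
  + /2 * (2 * g * s * E + 2 * (y + g*s*x) * (- (E * g * s * y / Bs g s x y))) * v1 * v2
  + /2 * (2 * x * (E * g * s * x / Bs g s x y)) * v2 * v1
  + /2 * (2 * E + 2 * (y + g*s*x) * (E * g * s * x / Bs g s x y)) * v2 * v2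
  = ((x*v2 - y*v1)/Bs g s x y)^2 + ((x*v1 + (y + g*s*x)*v2)/Bs g s x y)^2.
Proof. intros Hg Hs Hx HE. pose proof (Bpos g s x y Hg Hs Hx) as HB.
 assert (E = / Bs g s x y) by (field_simplify_eq; [lra| unfold Bs; lra]). subst E.
 unfold Bs in *. destruct (s_cases s Hs) as [-> | ->]; field; lra.
Qed.

Lemma gquad_eq g s x y v1 v2 : -2 < g < 2 -> s*s = 1 -> 0 < s*x ->
  K2F g x y = 1 -> x*v1 + (y + g*s*x)*v2 = 0 ->
  gquad g x y v1 v2 = ((x*v2 - y*v1)/BF g x y)^2.
Proof. intros Hg Hs Hx HK HC.
 unfold gquad. rewrite (gm11 g s x y), (gm12 g s x y), (gm21 g s x y), (gm22 g s x y) by auto.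
 rewrite (K2F_eq g s) in HK by auto. rewrite (BF_eq g s) by auto.
 unfold Qxx, Qyx, Qxy, Qyy, Ex, Ey. unfold Qs in HK.
 rewrite gquad_alg; auto. rewrite HC. unfold Rdiv. rewrite Rmult_0_l. simpl. ring.
 intro; subst; lra. rewrite Rmult_comm; auto.
Qed.

Lemma dQ_curve g h G s (c1 c2 : R -> R) t d1 d2 : HYP g h G s -> 0 < s * c1 t ->
  is_derive c1 t d1 -> is_derive c2 t d2 ->
  is_derive (fun r => Qs g h G s (c1 r) (c2 r)) t
    (Es g h G s (c1 t) (c2 t) * (2 * c1 t * d1 + 2 * (c2 t + g*s*c1 t) * d2)).
Proof. intros HY Hx D1 D2. hyp. unfold Qs, Bs, Es, Th.
 assert (HB := Bpos g s (c1 t) (c2 t) Hg Hs ltac:(nra)).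
 auto_derive. repeat split; try (eexists; eauto). nra.
 replace (Derive (fun x => c1 x) t) with d1 by (symmetry; apply is_derive_unique; auto).
 replace (Derive (fun x => c2 x) t) with d2 by (symmetry; apply is_derive_unique; auto).
 unfold Rdiv. set (e := exp _). set (x := c1 t) in *. set (y := c2 t) in *. clearbody e x y.
 assert (G = g / h) by (rewrite <- HG; field; lra). subst G. clear HG.
 destruct (s_cases s Hs) as [-> | ->]; field_simplify_eq; try (repeat split; nra).
 all: hpar g h; field; nra.
Qed.

Lemma d_invsqrt (b : R -> R) t (db : R) : 0 < b t -> is_derive b t db ->
  is_derive (fun r => / sqrt (b r)) t (- db / (2 * b t * sqrt (b t))).
Proof. intros Hb D. auto_derive. repeat split; try (eexists; eauto); auto. apply Rgt_not_eq, sqrt_lt_R0; auto.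
 replace (Derive (fun x => b x) t) with db by (symmetry; apply is_derive_unique; auto).
 pose proof (sqrt_lt_R0 _ Hb). pose proof (sqrt_sqrt _ (Rlt_le _ _ Hb)).
 set (q := sqrt (b t)) in *. set (B := b t) in *. rewrite <- H0. field. lra.
Qed.

Lemma dB_curve g s (c1 c2 : R -> R) t d1 d2 : is_derive c1 t d1 -> is_derive c2 t d2 ->
  is_derive (fun r => Bs g s (c1 r) (c2 r)) t (2 * c2 t * d2 + g*s*(d1 * c2 t + c1 t * d2) + 2 * c1 t * d1).
Proof. intros D1 D2. unfold Bs. auto_derive. repeat split; eexists; eauto.
 replace (Derive (fun x => c1 x) t) with d1 by (symmetry; apply is_derive_unique; auto).
 replace (Derive (fun x => c2 x) t) with d2 by (symmetry; apply is_derive_unique; auto). ring.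
Qed.

Definition Xs h s (c1 c2 : R -> R) g r := h * c1 r * / sqrt (Bs g s (c1 r) (c2 r)).
Definition Ys (h : R) s (c1 c2 : R -> R) g r := (c2 r + /2 * g * (s * c1 r)) * / sqrt (Bs g s (c1 r) (c2 r)).
Definition oms h s (c1 c2 : R -> R) g d1 d2 r := h * (c1 r * d2 - c2 r * d1) / Bs g s (c1 r) (c2 r).

Lemma dX_curve g h s (c1 c2 : R -> R) t d1 d2 : -2 < g < 2 -> 0 < h -> h*h = 1 - g*g/4 -> s*s = 1 ->
  0 < s * c1 t -> is_derive c1 t d1 -> is_derive c2 t d2 ->
  is_derive (Xs h s c1 c2 g) t (- Ys h s c1 c2 g t * oms h s c1 c2 g d1 d2 t).
Proof. intros Hg Hh Hh2 Hs Hx D1 D2. unfold Xs.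
 assert (HB := Bpos g s (c1 t) (c2 t) Hg Hs ltac:(nra)).
 eapply is_derive_eq. apply (dmul (fun r => h * c1 r) (fun r => / sqrt (Bs g s (c1 r) (c2 r)))).
 apply is_derive_scal; eauto. apply d_invsqrt. apply HB. apply dB_curve; eauto.
 unfold Ys, oms. pose proof (sqrt_lt_R0 _ HB).
 set (q := sqrt _) in *. unfold Bs in *. set (x := c1 t) in *. set (y := c2 t) in *. clearbody q x y.
 destruct (s_cases s Hs) as [-> | ->]; field; lra.
Qed.

Lemma dY_curve g h s (c1 c2 : R -> R) t d1 d2 : -2 < g < 2 -> 0 < h -> h*h = 1 - g*g/4 -> s*s = 1 ->
  0 < s * c1 t -> is_derive c1 t d1 -> is_derive c2 t d2 ->
  is_derive (Ys h s c1 c2 g) t (Xs h s c1 c2 g t * oms h s c1 c2 g d1 d2 t).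
Proof. intros Hg Hh Hh2 Hs Hx D1 D2. unfold Ys.
 assert (HB := Bpos g s (c1 t) (c2 t) Hg Hs ltac:(nra)).
 eapply is_derive_eq. apply (dmul (fun r => c2 r + /2 * g * (s * c1 r)) (fun r => / sqrt (Bs g s (c1 r) (c2 r)))).
 auto_derive; [repeat split; eexists; eauto | reflexivity]. apply d_invsqrt. apply HB. apply dB_curve; eauto.
 replace (Derive (fun x => c1 x) t) with d1 by (symmetry; apply is_derive_unique; auto).
 replace (Derive (fun x => c2 x) t) with d2 by (symmetry; apply is_derive_unique; auto).
 unfold Xs, oms. pose proof (sqrt_lt_R0 _ HB).
 set (q := sqrt _) in *. unfold Bs in *. set (x := c1 t) in *. set (y := c2 t) in *. clearbody q x y.
 destruct (s_cases s Hs) as [-> | ->]; field_simplify_eq; try lra.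
 all: hpar g h; field; nra.
Qed.

Lemma cmul (f k : R -> R) x : continuous f x -> continuous k x -> continuous (fun y => f y * k y) x.
Proof. intros. apply (continuous_mult f k x); auto. Qed.
Lemma cplus (f k : R -> R) x : continuous f x -> continuous k x -> continuous (fun y => f y + k y) x.
Proof. intros. apply (continuous_plus f k x); auto. Qed.
Lemma copp (f : R -> R) x : continuous f x -> continuous (fun y => - f y) x.
Proof. intros. apply (continuous_opp f x); auto. Qed.
Lemma cminus (f k : R -> R) x : continuous f x -> continuous k x -> continuous (fun y => f y - k y) x.
Proof. intros. apply cplus; auto. apply copp; auto. Qed.
Lemma cconst (a : R) x : continuous (fun _ : R => a) x.
Proof. apply continuous_const. Qed.
Lemma cid x : continuous (fun y : R => y) x.
Proof. apply continuous_id. Qed.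
Lemma cinv (f : R -> R) x : continuous f x -> f x <> 0 -> continuous (fun y => / f y) x.
Proof. intros. apply continuous_Rinv_comp; auto. Qed.
Lemma cdiv (f k : R -> R) x : continuous f x -> continuous k x -> k x <> 0 -> continuous (fun y => f y / k y) x.
Proof. intros. apply cmul; auto. apply cinv; auto. Qed.
Lemma csqrt (f : R -> R) x : continuous f x -> continuous (fun y => sqrt (f y)) x.
Proof. intros. apply continuous_sqrt_comp; auto. Qed.
Lemma cabs (f : R -> R) x : continuous f x -> continuous (fun y => Rabs (f y)) x.
Proof. intros. apply continuous_Rabs_comp; auto. Qed.
Lemma cpow2 (f : R -> R) x : continuous f x -> continuous (fun y => f y ^ 2) x.
Proof. intros. apply (continuous_ext (fun y => f y * f y)). intros; simpl; ring. apply cmul; auto. Qed.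
Lemma ccos (f : R -> R) x : continuous f x -> continuous (fun y => cos (f y)) x.
Proof. intros. apply (continuous_comp f cos); auto. apply continuity_pt_filterlim. apply continuity_cos. Qed.
Lemma csin (f : R -> R) x : continuous f x -> continuous (fun y => sin (f y)) x.
Proof. intros. apply (continuous_comp f sin); auto. apply continuity_pt_filterlim. apply continuity_sin. Qed.

Definition clamp t := Rmax 0 (Rmin 1 t).

Lemma clamp_id t : 0 <= t <= 1 -> clamp t = t.
Proof. intros. unfold clamp. rewrite Rmin_right by lra. rewrite Rmax_right; lra. Qed.
Lemma clamp_in t : 0 <= clamp t <= 1.
Proof. unfold clamp. unfold Rmax, Rmin. repeat destruct Rle_dec; lra. Qed.
Lemma clamp_lip a b : Rabs (clamp a - clamp b) <= Rabs (a - b).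
Proof. unfold clamp, Rmax, Rmin. repeat destruct Rle_dec; unfold Rabs; repeat destruct Rcase_abs; lra. Qed.

Lemma clamp_cont t : continuous clamp t.
Proof. apply filterlim_locally. intros eps. exists eps. intros y Hy.
 change (Rabs (clamp y - clamp t) < eps). change (Rabs (y - t) < eps) in Hy.
 eapply Rle_lt_trans. apply clamp_lip. auto. Qed.

Lemma comp_clamp (f : R -> R) : (forall t, 0 <= t <= 1 -> continuous f t) -> forall t, continuous (fun r => f (clamp r)) t.
Proof. intros H t. apply (continuous_comp clamp f). apply clamp_cont. apply H, clamp_in. Qed.

Lemma const1 (f : R -> R) p a b : a <= b -> (forall x, a <= x <= b -> continuous f x) ->
  (forall x, a < x < b -> x <> p -> is_derive f x 0) -> f a = f b.
Proof. intros Hab Hc Hd.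
 assert (M : forall u v, a <= u -> u <= v -> v <= b -> (forall x, u < x < v -> is_derive f x 0) -> f u = f v).
 { intros u v H1 H2 H3 H4. destruct (MVT_gen f u v (fun _ => 0)) as [c [_ Hc']].
   rewrite Rmin_left, Rmax_right by lra. intros; apply H4; lra.
   rewrite Rmin_left, Rmax_right by lra. intros; apply continuity_pt_filterlim, Hc; lra. lra. }
 destruct (classic (a < p < b)) as [Hp|Hp].
 - transitivity (f p). apply M; try lra. intros; apply Hd; lra.
   apply M; try lra. intros; apply Hd; lra.
 - apply M; try lra. intros; apply Hd; auto. intro; subst; auto.
Qed.

Lemma const2 (f : R -> R) p q a b : a <= b -> (forall x, a <= x <= b -> continuous f x) ->
  (forall x, a < x < b -> x <> p -> x <> q -> is_derive f x 0) -> f a = f b.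
Proof. intros Hab Hc Hd.
 destruct (classic (a < q < b)) as [Hq|Hq].
 - transitivity (f q). apply (const1 f p); try lra. intros; apply Hc; lra. intros; apply Hd; lra.
   apply (const1 f p); try lra. intros; apply Hc; lra. intros; apply Hd; lra.
 - apply (const1 f p); auto. intros; apply Hd; auto. intro; subst; auto.
Qed.

Lemma rint1 (f k : R -> R) p a b l : a <= b -> is_RInt k a b l ->
  (forall x, a < x < b -> x <> p -> f x = k x) -> is_RInt f a b l.
Proof. intros Hab Hk Hd.
 destruct (classic (a < p < b)) as [Hp|Hp].
 - assert (E : ex_RInt k a b) by (eexists; eauto).
   assert (E1 : ex_RInt k a p) by (apply (ex_RInt_Chasles_1 (V:=R_CompleteNormedModule) k a p b); auto; lra).
   assert (E2 : ex_RInt k p b) by (apply (ex_RInt_Chasles_2 (V:=R_CompleteNormedModule) k a p b); auto; lra).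
   assert (H1 : is_RInt f a p (RInt k a p)).
   { apply is_RInt_ext with k. rewrite Rmin_left, Rmax_right by lra. intros; symmetry; apply Hd; lra.
     exact (RInt_correct k a p E1). }
   assert (H2 : is_RInt f p b (RInt k p b)).
   { apply is_RInt_ext with k. rewrite Rmin_left, Rmax_right by lra. intros; symmetry; apply Hd; lra.
     exact (RInt_correct k p b E2). }
   pose proof (is_RInt_Chasles f a p b _ _ H1 H2) as H3.
   assert (Hl : RInt k a p + RInt k p b = l).
   { pose proof (RInt_Chasles k a p b E1 E2) as HC. rewrite <- (is_RInt_unique k a b l Hk). exact HC. }
   rewrite <- Hl. exact H3.
 - apply is_RInt_ext with k; auto. rewrite Rmin_left, Rmax_right by lra. intros; symmetry; apply Hd; auto.
   intro; subst; auto.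
Qed.

Lemma rint2 (f k : R -> R) p q a b l : a <= b -> is_RInt k a b l ->
  (forall x, a < x < b -> x <> p -> x <> q -> f x = k x) -> is_RInt f a b l.
Proof. intros Hab Hk Hd.
 apply rint1 with (fun x => if Req_EM_T x p then k x else f x) p; auto.
 apply rint1 with k q; auto. intros. destruct Req_EM_T; auto.
 intros. destruct Req_EM_T; [contradiction|auto].
Qed.

Lemma mono3 (f : R -> R) a m b : (forall x, continuous f x) ->
  (forall x y, a <= x <= b -> a <= y <= b -> f x = f y -> x = y) -> a < m < b ->
  (f a < f m < f b) \/ (f b < f m < f a).
Proof. intros Hc Hi Hm.
 assert (fa_m : f a <> f m) by (intro E; apply Hi in E; lra).
 assert (fb_m : f b <> f m) by (intro E; apply Hi in E; lra).
 assert (fa_b : f a <> f b) by (intro E; apply Hi in E; lra).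
 destruct (Rlt_or_le (f a) (f m)) as [H1|H1]; destruct (Rlt_or_le (f b) (f m)) as [H2|H2].
 - exfalso. set (v := (f m + Rmax (f a) (f b))/2).
   assert (Hv1 : Rmax (f a) (f b) < v < f m) by (unfold v; unfold Rmax; destruct Rle_dec; lra).
   assert (Hva : f a < v) by (pose proof (Rmax_l (f a) (f b)); lra).
   assert (Hvb : f b < v) by (pose proof (Rmax_r (f a) (f b)); lra).
   destruct (IVT_gen_consistent f a m v Hc) as [x [Hx Ex]].
   rewrite Rmin_left, Rmax_right; lra.
   destruct (IVT_gen_consistent f m b v Hc) as [y [Hy Ey]].
   rewrite Rmin_right, Rmax_left; lra.
   rewrite Rmin_left, Rmax_right in Hx by lra. rewrite Rmin_left, Rmax_right in Hy by lra.
   assert (x <> m) by (intro; subst; lra). assert (y <> m) by (intro; subst; lra).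
   assert (x = y) by (apply Hi; try lra; congruence). lra.
 - left; lra.
 - right; lra.
 - exfalso. assert (H1' : f m < f a) by lra. assert (H2' : f m < f b) by lra.
   set (v := (f m + Rmin (f a) (f b))/2).
   assert (Hv1 : f m < v < Rmin (f a) (f b)) by (unfold v; unfold Rmin; destruct Rle_dec; lra).
   assert (Hva : v < f a) by (pose proof (Rmin_l (f a) (f b)); lra).
   assert (Hvb : v < f b) by (pose proof (Rmin_r (f a) (f b)); lra).
   destruct (IVT_gen_consistent f a m v Hc) as [x [Hx Ex]].
   rewrite Rmin_right, Rmax_left; lra.
   destruct (IVT_gen_consistent f m b v Hc) as [y [Hy Ey]].
   rewrite Rmin_left, Rmax_right; lra.
   rewrite Rmin_left, Rmax_right in Hx by lra. rewrite Rmin_left, Rmax_right in Hy by lra.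
   assert (x <> m) by (intro; subst; lra). assert (y <> m) by (intro; subst; lra).
   assert (x = y) by (apply Hi; try lra; congruence). lra.
Qed.

Definition Inj01 (f : R -> R) := forall x y, 0 < x < 1 -> 0 < y < 1 -> f x = f y -> x = y.

Lemma pairs (f : R -> R) x y z w : (forall u, continuous f u) -> Inj01 f ->
  0 < x < y -> y < 1 -> 0 < z < w -> w < 1 -> (f x < f y <-> f z < f w).
Proof. intros Hc Hi H1 H2 H3 H4.
 assert (S1 : forall u v v', 0 < u < v -> v <= v' -> v' < 1 -> (f u < f v <-> f u < f v')).
 { intros u v v' A B C. destruct (Req_dec v v') as [->|Hne]. tauto.
   assert (K : (f u < f v < f v') \/ (f v' < f v < f u)) by (apply mono3; auto; [intros; apply Hi; lra | lra]).
   destruct K; split; intros; lra. }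
 assert (S2 : forall u u' M, 0 < u <= u' -> u' < M -> M < 1 -> (f u < f M <-> f u' < f M)).
 { intros u u' M A B C. destruct (Req_dec u u') as [->|Hne]. tauto.
   assert (K : (f u < f u' < f M) \/ (f M < f u' < f u)) by (apply mono3; auto; [intros; apply Hi; lra | lra]).
   destruct K; split; intros; lra. }
 set (M := Rmax y w). assert (y <= M) by apply Rmax_l. assert (w <= M) by apply Rmax_r.
 assert (M < 1) by (unfold M, Rmax; destruct Rle_dec; lra).
 rewrite (S1 x y M) by lra. rewrite (S1 z w M) by lra.
 destruct (Rle_lt_dec x z). apply S2; lra. symmetry. apply S2; lra.
Qed.

Lemma BF_pos g x y : -2 < g < 2 -> (x <> 0 \/ y <> 0) -> 0 < BF g x y.
Proof. intros Hg H. unfold BF, qF. destruct (Req_dec x 0) as [->|Hx].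
 - rewrite Rabs_R0. destruct H as [H|H]; [lra|]. simpl.
   assert (0 < y*y) by (apply Rsqr_pos_lt in H; unfold Rsqr in H; lra). nra.
 - assert (Ha : Rabs x <> 0) by (apply Rabs_no_R0; auto).
   pose proof (Bpos g 1 (Rabs x) y Hg ltac:(ring) Ha). simpl. nra.
Qed.

Lemma KF_00 g : KF g 0 0 = 0.
Proof. unfold KF. destruct (Req_EM_T 0 0); [|lra]. destruct (Req_EM_T 0 0); [|lra]. auto. Qed.

Lemma KF_nz g x y : x <> 0 -> KF g x y = sqrt (BF g x y) * exp (/2 * GF g * atan ((y + /2*g*Rabs x) / (hF g * Rabs x))).
Proof. intros Hx. unfold KF. destruct (Req_EM_T x 0); [contradiction|].
 unfold JF, PhiF, AF, qF. destruct (Rlt_dec 0 (Rabs x)). auto.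
 exfalso. apply n0. apply Rabs_pos_lt; auto. Qed.

Lemma KF_ax g y : y <> 0 -> KF g 0 y = Rabs y * exp (/2 * GF g * (if Rlt_dec 0 y then PI/2 else - (PI/2))).
Proof. intros Hy. unfold KF. destruct (Req_EM_T 0 0); [|lra]. destruct (Req_EM_T y 0); [contradiction|].
 unfold JF, PhiF, BF, qF. rewrite !Rabs_R0. destruct (Rlt_dec 0 0); [lra|].
 f_equal. replace (y^2 + g*0*y + 0^2) with (Rsqr y) by (unfold Rsqr; ring). apply sqrt_Rsqr_abs. Qed.

Definition Xv g x y := hF g * x * / sqrt (BF g x y).
Definition Yv g x y := (y + /2 * g * Rabs x) * / sqrt (BF g x y).

Lemma XY_sq g x y : -2 < g < 2 -> (x <> 0 \/ y <> 0) -> Xv g x y ^ 2 + Yv g x y ^ 2 = 1.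
Proof. intros Hg H. pose proof (BF_pos g x y Hg H) as HB. unfold Xv, Yv.
 pose proof (sqrt_lt_R0 _ HB). pose proof (sqrt_sqrt _ (Rlt_le _ _ HB)) as Hq.
 pose proof (hF_sq g Hg) as Hh. set (q := sqrt _) in *. set (h := hF g) in *.
 unfold BF, qF in Hq. pose proof (Rsqr_abs x) as Ha. unfold Rsqr in Ha.
 set (a := Rabs x) in *.
 transitivity ((h*h*(x*x) + (y + /2*g*a)^2) / (q*q)). field; lra.
 rewrite Hq, Hh, Ha. field. rewrite <- Hq. nra.
Qed.

Lemma nonorig g x y : KF g x y = 1 -> x <> 0 \/ y <> 0.
Proof. intros H. destruct (Req_dec x 0); destruct (Req_dec y 0); auto. subst. rewrite KF_00 in H. lra. Qed.

Lemma BF_ax g y : BF g 0 y = y * y.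
Proof. unfold BF, qF. rewrite Rabs_R0. simpl. ring. Qed.

Lemma arg_eq g x y s : -2 < g < 2 -> s*s = 1 -> 0 < s*x ->
  (y + /2*g*Rabs x) / (hF g * Rabs x) = Yv g x y / (s * Xv g x y).
Proof. intros Hg Hs Hx. assert (Hx0 : x <> 0) by (intro; subst; lra).
 pose proof (BF_pos g x y Hg (or_introl Hx0)) as HB. pose proof (sqrt_lt_R0 _ HB).
 pose proof (hF_pos g Hg). unfold Yv, Xv. rewrite (abs_s s x) by auto.
 set (q := sqrt _) in *. field. repeat split; try lra. intro; subst; lra.
Qed.

Lemma XY_inj g x y x' y' : -2 < g < 2 -> KF g x y = 1 -> KF g x' y' = 1 ->
  Xv g x y = Xv g x' y' -> Yv g x y = Yv g x' y' -> x = x' /\ y = y'.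
Proof. intros Hg HK HK' HX HY.
 pose proof (nonorig g x y HK) as N. pose proof (nonorig g x' y' HK') as N'.
 pose proof (BF_pos g x y Hg N) as HB. pose proof (BF_pos g x' y' Hg N') as HB'.
 pose proof (sqrt_lt_R0 _ HB) as Hq. pose proof (sqrt_lt_R0 _ HB') as Hq'.
 pose proof (hF_pos g Hg) as Hh.
 destruct (Req_dec x 0) as [Hx0|Hx0].
 - subst x. assert (x' = 0).
   { unfold Xv in HX. rewrite Rmult_0_r, Rmult_0_l in HX.
     symmetry in HX. apply Rmult_integral in HX. destruct HX as [HX|HX].
     apply Rmult_integral in HX; destruct HX; lra.
     apply Rinv_neq_0_compat in HX; [contradiction|lra]. }
   subst x'. split; auto.
   destruct N as [N|N]; [lra|]. destruct N' as [N'|N']; [lra|].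
   unfold Yv in HY. rewrite !BF_ax, !Rabs_R0 in HY.
   replace (sqrt (y*y)) with (Rabs y) in HY by (symmetry; apply sqrt_Rsqr_abs).
   replace (sqrt (y'*y')) with (Rabs y') in HY by (symmetry; apply sqrt_Rsqr_abs).
   rewrite KF_ax in HK, HK' by auto.
   destruct (Rlt_dec 0 y) as [Py|Py]; destruct (Rlt_dec 0 y') as [Py'|Py'].
   + rewrite !Rabs_right in * by lra.
     assert (E : exp (/ 2 * GF g * (PI / 2)) > 0) by apply exp_pos.
     apply (Rmult_eq_reg_r (exp (/ 2 * GF g * (PI / 2)))); lra.
   + exfalso. rewrite Rabs_right in HY by lra. rewrite Rabs_left in HY by lra.
     replace ((y + / 2 * g * 0) * / y) with 1 in HY by (field; lra).
     replace ((y' + / 2 * g * 0) * / - y') with (-1) in HY by (field; lra). lra.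
   + exfalso. rewrite Rabs_left in HY by lra. rewrite Rabs_right in HY by lra.
     replace ((y + / 2 * g * 0) * / - y) with (-1) in HY by (field; lra).
     replace ((y' + / 2 * g * 0) * / y') with 1 in HY by (field; lra). lra.
   + rewrite !Rabs_left in * by lra.
     assert (E : exp (/ 2 * GF g * - (PI / 2)) > 0) by apply exp_pos.
     assert (- y = - y') by (apply (Rmult_eq_reg_r (exp (/ 2 * GF g * - (PI / 2)))); lra). lra.
 - assert (Hx0' : x' <> 0).
   { intro E. subst x'. unfold Xv at 2 in HX. rewrite Rmult_0_r, Rmult_0_l in HX.
     unfold Xv in HX. apply Rmult_integral in HX. destruct HX as [HX|HX].
     apply Rmult_integral in HX; destruct HX; lra.
     apply Rinv_neq_0_compat in HX; [contradiction|lra]. }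
   set (s := if Rlt_dec 0 x then 1 else -1).
   assert (Hs : s*s = 1) by (unfold s; destruct Rlt_dec; lra).
   assert (Hsx : 0 < s*x) by (unfold s; destruct Rlt_dec; [lra|]; assert (x < 0) by lra; lra).
   assert (Hsx' : 0 < s*x').
   { unfold Xv in HX. assert (0 < s * (hF g * x * / sqrt (BF g x y))).
     { replace (s * (hF g * x * / sqrt (BF g x y))) with (hF g * (s*x) * / sqrt (BF g x y)) by ring.
       apply Rmult_lt_0_compat. nra. apply Rinv_0_lt_compat; lra. }
     rewrite HX in H. 
     replace (s * (hF g * x' * / sqrt (BF g x' y'))) with (hF g * (s*x') * / sqrt (BF g x' y')) in H by ring.
     assert (0 < / sqrt (BF g x' y')) by (apply Rinv_0_lt_compat; lra).
     destruct (Rlt_or_le 0 (s*x')) as [P|P]; auto.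
     assert (hF g * (s * x') * / sqrt (BF g x' y') <= 0).
     { apply Rmult_le_0_r; [|lra]. apply Rmult_le_0_l; lra. } lra. }
   rewrite KF_nz in HK, HK' by auto.
   rewrite (arg_eq g x y s) in HK by auto. rewrite (arg_eq g x' y' s) in HK' by auto.
   rewrite HX, HY in HK.
   assert (Eq : sqrt (BF g x y) = sqrt (BF g x' y')).
   { set (e := exp _) in HK, HK'. assert (e > 0) by apply exp_pos.
     apply (Rmult_eq_reg_r e); lra. }
   unfold Xv, Yv in HX, HY. rewrite Eq in HX, HY.
   set (q := sqrt (BF g x' y')) in *.
   assert (x = x').
   { apply (f_equal (fun z => z * q / hF g)) in HX. field_simplify in HX; lra. }
   subst x'. split; auto.
   apply (f_equal (fun z => z * q)) in HY. field_simplify in HY; try lra.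
Qed.

Lemma exd_cont (f : R -> R) x : ex_derive f x -> continuous f x.
Proof. intros H. exact (ex_derive_continuous f x H). Qed.

Lemma exR_cont (f : R -> R) a b : (forall z, Rmin a b <= z <= Rmax a b -> continuous f z) -> ex_RInt f a b.
Proof. intros H. exact (ex_RInt_continuous f a b H). Qed.

Lemma RInt_scalR (f : R -> R) a b k : ex_RInt f a b -> RInt (fun x => k * f x) a b = k * RInt f a b.
Proof. intros H. exact (RInt_scal f a b k H). Qed.

Lemma is_RInt_scalR (f : R -> R) a b k l : is_RInt f a b l -> is_RInt (fun x => k * f x) a b (k * l).
Proof. intros H. exact (is_RInt_scal f a b k l H). Qed.

Lemma RInt_correctR (f : R -> R) a b : ex_RInt f a b -> is_RInt f a b (RInt f a b).
Proof. intros H. exact (RInt_correct f a b H). Qed.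

Lemma cos1_lt x : 0 < x < 2*PI -> cos x <> 1.
Proof. intros H E. replace x with (2*(x/2)) in E by field. rewrite cos_2a_sin in E.
 assert (0 < sin (x/2)) by (apply sin_gt_0; lra). nra. Qed.

Lemma phi_2pi (phi : R -> R) : (forall x, continuous phi x) -> phi 0 = 0 ->
  (forall a b, 0 <= a -> a <= b -> b <= 1 -> phi a <= phi b) -> cos (phi 1) = 1 ->
  (forall t, 0 < t < 1 -> cos (phi t) = 1 -> sin (phi t) = 0 -> False) -> phi 1 = 2*PI.
Proof. intros Hc H0 Hm Hcos Hno. pose proof PI_RGT_0.
 assert (P1 : 0 <= phi 1) by (rewrite <- H0; apply Hm; lra).
 destruct (Req_dec (phi 1) 0) as [Z|Z].
 { exfalso. assert (phi (1/2) = 0). { pose proof (Hm 0 (1/2)). pose proof (Hm (1/2) 1). lra. }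
   apply (Hno (1/2)). lra. rewrite H1; apply cos_0. rewrite H1; apply sin_0. }
 destruct (Rlt_or_le (phi 1) (2*PI)) as [L|L].
 { exfalso. apply (cos1_lt (phi 1)); auto. lra. }
 destruct (Req_dec (phi 1) (2*PI)) as [E|E]; auto. exfalso.
 destruct (IVT_gen_consistent phi 0 1 (2*PI) Hc) as [t [Ht Et]].
 rewrite H0. rewrite Rmin_left, Rmax_right; lra.
 rewrite Rmin_left, Rmax_right in Ht by lra.
 assert (t <> 0) by (intro; subst; lra). assert (t <> 1) by (intro; subst; lra).
 apply (Hno t). lra. rewrite Et; apply cos_2PI. rewrite Et; apply sin_2PI.
Qed.

Section Curve.
Variables (g : R) (c1 c2 : R -> R).
Hypothesis Hg : -2 < g < 2.
Hypothesis HD : forall t, 0 <= t <= 1 ->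
     ex_derive c1 t /\ ex_derive c2 t /\ continuous (Derive c1) t /\ continuous (Derive c2) t.
Hypothesis HK : forall t, 0 <= t <= 1 -> KF g (c1 t) (c2 t) = 1.
Hypothesis H01 : c1 0 = c1 1.
Hypothesis H02 : c2 0 = c2 1.
Hypothesis HI : forall s t, 0 <= s < 1 -> 0 <= t < 1 -> c1 s = c1 t -> c2 s = c2 t -> s = t.

Definition BB t := BF g (c1 t) (c2 t).
Definition om t := hF g * (c1 t * Derive c2 t - c2 t * Derive c1 t) / BB t.
Definition Xf t := Xv g (c1 t) (c2 t).
Definition Yf t := Yv g (c1 t) (c2 t).
Definition omh t := om (clamp t).
Definition th t := RInt omh 0 t.

Lemma nz t : 0 <= t <= 1 -> c1 t <> 0 \/ c2 t <> 0.
Proof. intros. apply (nonorig g). apply HK; auto. Qed.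

Lemma BBpos t : 0 <= t <= 1 -> 0 < BB t.
Proof. intros. apply BF_pos; auto. apply nz; auto. Qed.

Lemma c1c t : 0 <= t <= 1 -> continuous c1 t.
Proof. intros. apply exd_cont, HD; auto. Qed.
Lemma c2c t : 0 <= t <= 1 -> continuous c2 t.
Proof. intros. apply exd_cont, HD; auto. Qed.

Lemma BBc t : 0 <= t <= 1 -> continuous BB t.
Proof. intros. unfold BB, BF, qF. pose proof (c1c t H). pose proof (c2c t H).
 apply cplus. apply cplus. apply cpow2; auto. apply cmul; auto. apply cmul. apply cconst. apply cabs; auto.
 apply cpow2, cabs; auto. Qed.

Lemma omc t : 0 <= t <= 1 -> continuous om t.
Proof. intros. unfold om. pose proof (c1c t H). pose proof (c2c t H). destruct (HD t H) as (_&_&D1&D2).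
 apply cdiv. apply cmul. apply cconst. apply cminus; apply cmul; auto. apply BBc; auto.
 apply Rgt_not_eq, BBpos; auto. Qed.

Lemma Xc t : 0 <= t <= 1 -> continuous Xf t.
Proof. intros. unfold Xf, Xv. pose proof (c1c t H). 
 apply cmul. apply cmul; auto. apply cconst. apply cinv. apply csqrt. apply (BBc t H).
 apply Rgt_not_eq, sqrt_lt_R0, BBpos; auto. Qed.

Lemma Yc t : 0 <= t <= 1 -> continuous Yf t.
Proof. intros. unfold Yf, Yv. pose proof (c1c t H). pose proof (c2c t H).
 apply cmul. apply cplus; auto. apply cmul. apply cconst. apply cabs; auto. apply cinv. apply csqrt. apply (BBc t H).
 apply Rgt_not_eq, sqrt_lt_R0, BBpos; auto. Qed.

Lemma omhc t : continuous omh t.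
Proof. apply (comp_clamp om). apply omc. Qed.

Lemma ex_omh a b : ex_RInt omh a b.
Proof. apply exR_cont. intros; apply omhc. Qed.

Lemma thd t : is_derive th t (omh t).
Proof. unfold th. apply is_derive_RInt with 0. apply filter_forall. intros. apply (RInt_correct omh 0 x (ex_omh 0 x)).
 apply omhc. Qed.

Lemma thc t : continuous th t.
Proof. apply exd_cont. eexists; apply thd. Qed.

Lemma th0 : th 0 = 0.
Proof. unfold th. exact (RInt_point 0 omh). Qed.

Lemma th_diff a b : th b - th a = RInt omh a b.
Proof. unfold th. pose proof (RInt_Chasles omh 0 a b (ex_omh 0 a) (ex_omh a b)) as HC.
 assert (HC' : RInt omh 0 a + RInt omh a b = RInt omh 0 b) by exact HC. lra. Qed.

Lemma loc01 t : 0 < t < 1 -> locally t (fun r => 0 < r < 1).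
Proof. intros Ht. assert (Hm : 0 < Rmin t (1-t)) by (apply Rmin_pos; lra).
 exists (mkposreal _ Hm). intros r Hr. change (Rabs (r - t) < Rmin t (1-t)) in Hr.
 apply Rabs_def2 in Hr. pose proof (Rmin_l t (1-t)). pose proof (Rmin_r t (1-t)). lra. Qed.

Lemma loc_sign t s : 0 <= t <= 1 -> 0 < s * c1 t -> locally t (fun r => 0 < s * c1 r).
Proof. intros Ht Hs. exact (c1c t Ht _ (loc_pos s (c1 t) Hs)). Qed.

Definition sgn t := if Rlt_dec 0 (c1 t) then 1 else -1.
Lemma sgn_ok t : c1 t <> 0 -> sgn t * sgn t = 1 /\ 0 < sgn t * c1 t.
Proof. intros. unfold sgn. destruct Rlt_dec; split; try lra. Qed.

Lemma Xf_der t : 0 < t < 1 -> c1 t <> 0 -> is_derive Xf t (- Yf t * om t).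
Proof. intros Ht Hc. destruct (sgn_ok t Hc) as [Hs Hsx]. set (s := sgn t) in *.
 destruct (HD t ltac:(lra)) as (E1 & E2 & _).
 apply is_derive_ext_loc with (Xs (hF g) s c1 c2 g).
 apply (filter_imp (fun r => 0 < s * c1 r)). intros r Hr. unfold Xs, Xf, Xv. rewrite (BF_eq g s) by auto. auto.
 apply loc_sign; auto; lra.
 eapply is_derive_eq. apply (dX_curve g (hF g) s c1 c2 t (Derive c1 t) (Derive c2 t)); auto.
 apply hF_pos; auto. apply hF_sq; auto. apply Derive_correct; auto. apply Derive_correct; auto.
 unfold Ys, Yf, Yv, oms, om, BB. rewrite (BF_eq g s) by auto. rewrite (abs_s s (c1 t)) by auto. auto.
Qed.

Lemma Yf_der t : 0 < t < 1 -> c1 t <> 0 -> is_derive Yf t (Xf t * om t).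
Proof. intros Ht Hc. destruct (sgn_ok t Hc) as [Hs Hsx]. set (s := sgn t) in *.
 destruct (HD t ltac:(lra)) as (E1 & E2 & _).
 apply is_derive_ext_loc with (Ys (hF g) s c1 c2 g).
 apply (filter_imp (fun r => 0 < s * c1 r)). intros r Hr. unfold Ys, Yf, Yv. rewrite (BF_eq g s) by auto.
 rewrite (abs_s s (c1 r)) by auto. auto.
 apply loc_sign; auto; lra.
 eapply is_derive_eq. apply (dY_curve g (hF g) s c1 c2 t (Derive c1 t) (Derive c2 t)); auto.
 apply hF_pos; auto. apply hF_sq; auto. apply Derive_correct; auto. apply Derive_correct; auto.
 unfold Xs, Xf, Xv, oms, om, BB. rewrite (BF_eq g s) by auto. auto.
Qed.

Lemma constraint t : 0 < t < 1 -> c1 t <> 0 ->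
  c1 t * Derive c1 t + (c2 t + g * sgn t * c1 t) * Derive c2 t = 0.
Proof. intros Ht Hc. destruct (sgn_ok t Hc) as [Hs Hsx]. set (s := sgn t) in *.
 destruct (HD t ltac:(lra)) as (E1 & E2 & _).
 pose proof (dQ_curve g (hF g) (GF g) s c1 c2 t (Derive c1 t) (Derive c2 t) (HYP_F g s Hg Hs) Hsx
   (Derive_correct _ _ E1) (Derive_correct _ _ E2)) as D.
 assert (D0 : is_derive (fun r => Qs g (hF g) (GF g) s (c1 r) (c2 r)) t 0).
 { apply is_derive_ext_loc with (fun _ => 1).
   apply (filter_imp (fun r => 0 < r < 1 /\ 0 < s * c1 r)). intros r [Hr Hr'].
   rewrite <- (K2F_eq g s) by auto. unfold K2F. rewrite HK by lra. rewrite pow1; reflexivity.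
   apply filter_and. apply loc01; auto. apply loc_sign; auto; lra.
   apply (is_derive_const 1 t). }
 pose proof (is_derive_unique _ _ _ D) as U1. pose proof (is_derive_unique _ _ _ D0) as U2.
 rewrite U1 in U2. unfold Es in U2. pose proof (exp_pos (GF g * Th g (hF g) s (c1 t) (c2 t))).
 apply Rmult_integral in U2. destruct U2 as [U|U]; lra.
Qed.

Lemma integrand t : 0 < t < 1 -> c1 t <> 0 ->
  sqrt (gquad g (c1 t) (c2 t) (Derive c1 t) (Derive c2 t)) = Rabs (om t) / hF g.
Proof. intros Ht Hc. destruct (sgn_ok t Hc) as [Hs Hsx]. set (s := sgn t) in *.
 assert (HK2 : K2F g (c1 t) (c2 t) = 1) by (unfold K2F; rewrite HK by lra; apply pow1).
 pose proof (constraint t Ht Hc) as HC. fold s in HC.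
 rewrite (gquad_eq g s) by auto.
 pose proof (hF_pos g Hg).
 replace (Rabs (om t) / hF g) with (Rabs (om t / hF g)).
 rewrite <- sqrt_Rsqr_abs. f_equal. unfold Rsqr, om, BB. field. split. apply Rgt_not_eq, BBpos; lra. lra.
 rewrite Rabs_div by lra. rewrite (Rabs_right (hF g)) by lra. auto.
Qed.

Definition Fh t := Xf t * cos (th t) + Yf t * sin (th t).
Definition Gh t := Yf t * cos (th t) - Xf t * sin (th t).

Lemma Fh_der t : 0 < t < 1 -> c1 t <> 0 -> is_derive Fh t 0.
Proof. intros Ht Hc. pose proof (Xf_der t Ht Hc) as DX. pose proof (Yf_der t Ht Hc) as DY.
 pose proof (thd t) as DT. unfold Fh. auto_derive.
 repeat split; eexists; eauto.
 replace (Derive (fun x => Xf x) t) with (- Yf t * om t) by (symmetry; apply is_derive_unique; auto).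
 replace (Derive (fun x => Yf x) t) with (Xf t * om t) by (symmetry; apply is_derive_unique; auto).
 replace (Derive (fun x => th x) t) with (omh t) by (symmetry; apply is_derive_unique; auto).
 unfold omh. rewrite clamp_id by lra. ring.
Qed.

Lemma Gh_der t : 0 < t < 1 -> c1 t <> 0 -> is_derive Gh t 0.
Proof. intros Ht Hc. pose proof (Xf_der t Ht Hc) as DX. pose proof (Yf_der t Ht Hc) as DY.
 pose proof (thd t) as DT. unfold Gh. auto_derive.
 repeat split; eexists; eauto.
 replace (Derive (fun x => Xf x) t) with (- Yf t * om t) by (symmetry; apply is_derive_unique; auto).
 replace (Derive (fun x => Yf x) t) with (Xf t * om t) by (symmetry; apply is_derive_unique; auto).
 replace (Derive (fun x => th x) t) with (omh t) by (symmetry; apply is_derive_unique; auto).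
 unfold omh. rewrite clamp_id by lra. ring.
Qed.

Lemma Yv_ax y : 0 < y -> Yv g 0 y = 1.
Proof. intros. unfold Yv. rewrite BF_ax, Rabs_R0. replace (sqrt (y*y)) with (Rabs y) by (symmetry; apply sqrt_Rsqr_abs).
 rewrite Rabs_right by lra. field. lra. Qed.
Lemma Yv_ax' y : y < 0 -> Yv g 0 y = -1.
Proof. intros. unfold Yv. rewrite BF_ax, Rabs_R0. replace (sqrt (y*y)) with (Rabs y) by (symmetry; apply sqrt_Rsqr_abs).
 rewrite Rabs_left by lra. field. lra. Qed.
Lemma Xv_ax y : Xv g 0 y = 0.
Proof. unfold Xv. ring. Qed.

Lemma pt_inj s t : 0 <= s < 1 -> 0 <= t < 1 -> Xf s = Xf t -> Yf s = Yf t -> s = t.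
Proof. intros Hs Ht HX HY. assert (K1 : KF g (c1 s) (c2 s) = 1) by (apply HK; lra).
 assert (K2 : KF g (c1 t) (c2 t) = 1) by (apply HK; lra).
 destruct (XY_inj g (c1 s) (c2 s) (c1 t) (c2 t) Hg K1 K2 HX HY) as [E1 E2]. apply HI; auto. Qed.

Lemma prod_pos a b : 0 < a*b -> (0<a /\ 0<b) \/ (a<0 /\ b<0).
Proof. intros H. destruct (Rlt_or_le 0 a); destruct (Rlt_or_le 0 b); [left; lra| | |].
 exfalso; nra. destruct (Req_dec a 0). subst. lra. exfalso; nra. 
 destruct (Req_dec a 0). subst. lra. destruct (Req_dec b 0). subst. lra. right; lra. Qed.

Lemma exc : exists p q, forall t, 0 < t < 1 -> c1 t = 0 -> t = p \/ t = q.
Proof.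
 assert (U : forall a b, 0 < a < 1 -> 0 < b < 1 -> c1 a = 0 -> c1 b = 0 -> 0 < c2 a * c2 b -> a = b).
 { intros a b Ha Hb Ea Eb P. apply pt_inj; try lra. unfold Xf. rewrite Ea, Eb, !Xv_ax; auto.
   unfold Yf. rewrite Ea, Eb. destruct (prod_pos _ _ P) as [[A B]|[A B]].
   rewrite !Yv_ax; auto. rewrite !Yv_ax'; auto. }
 assert (PP : forall a b, 0 < a -> 0 < b -> 0 < a * b) by (intros; apply Rmult_lt_0_compat; auto).
 assert (NN : forall a b, a < 0 -> b < 0 -> 0 < a * b) by (intros; replace (a*b) with ((-a)*(-b)) by ring; apply Rmult_lt_0_compat; lra).
 destruct (classic (exists p, 0 < p < 1 /\ c1 p = 0 /\ 0 < c2 p)) as [[p Hp]|Np];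
 destruct (classic (exists q, 0 < q < 1 /\ c1 q = 0 /\ c2 q < 0)) as [[q Hq]|Nq].
 - exists p, q. intros t Ht E. destruct (nz t ltac:(lra)) as [N|N]; [contradiction|].
   destruct (Rlt_or_le 0 (c2 t)). left; apply U; try tauto; apply PP; tauto.
   right; apply U; try tauto. apply NN; lra.
 - exists p, p. intros t Ht E. destruct (nz t ltac:(lra)) as [N|N]; [contradiction|].
   destruct (Rlt_or_le 0 (c2 t)). left; apply U; try tauto; apply PP; tauto. exfalso; apply Nq; exists t; repeat split; lra.
 - exists q, q. intros t Ht E. destruct (nz t ltac:(lra)) as [N|N]; [contradiction|].
   destruct (Rlt_or_le 0 (c2 t)). exfalso; apply Np; exists t; repeat split; lra. left; apply U; try tauto. apply NN; lra.
 - exists 0, 0. intros t Ht E. destruct (nz t ltac:(lra)) as [N|N]; [contradiction|].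
   destruct (Rlt_or_le 0 (c2 t)). exfalso; apply Np; exists t; repeat split; lra.
   exfalso; apply Nq; exists t; repeat split; lra.
Qed.

Lemma Fhc t : 0 <= t <= 1 -> continuous Fh t.
Proof. intros. unfold Fh. apply cplus; apply cmul. apply Xc; auto. apply ccos, thc. apply Yc; auto. apply csin, thc. Qed.
Lemma Ghc t : 0 <= t <= 1 -> continuous Gh t.
Proof. intros. unfold Gh. apply cminus; apply cmul. apply Yc; auto. apply ccos, thc. apply Xc; auto. apply csin, thc. Qed.

Lemma FG_const t : 0 <= t <= 1 -> Fh t = Xf 0 /\ Gh t = Yf 0.
Proof. intros Ht. destruct exc as (p & q & Hpq).
 assert (F0 : Fh 0 = Xf 0) by (unfold Fh; rewrite th0, cos_0, sin_0; ring).
 assert (G0 : Gh 0 = Yf 0) by (unfold Gh; rewrite th0, cos_0, sin_0; ring).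
 split.
 - rewrite <- F0. symmetry. apply (const2 Fh p q 0 t). lra. intros; apply Fhc; lra.
   intros x Hx Hp Hq. apply Fh_der. lra. intro E. destruct (Hpq x ltac:(lra) E); auto.
 - rewrite <- G0. symmetry. apply (const2 Gh p q 0 t). lra. intros; apply Ghc; lra.
   intros x Hx Hp Hq. apply Gh_der. lra. intro E. destruct (Hpq x ltac:(lra) E); auto.
Qed.

Lemma XY_rot t : 0 <= t <= 1 ->
  Xf t = Xf 0 * cos (th t) - Yf 0 * sin (th t) /\ Yf t = Xf 0 * sin (th t) + Yf 0 * cos (th t).
Proof. intros Ht. destruct (FG_const t Ht) as [F G]. rewrite <- F, <- G. unfold Fh, Gh.
 pose proof (sin2_cos2 (th t)) as S. unfold Rsqr in S. split.
 - transitivity (Xf t * (sin (th t) * sin (th t) + cos (th t) * cos (th t))). rewrite S; ring. ring.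
 - transitivity (Yf t * (sin (th t) * sin (th t) + cos (th t) * cos (th t))). rewrite S; ring. ring.
Qed.

Lemma X0Y0 : Xf 0 * Xf 0 + Yf 0 * Yf 0 = 1.
Proof. pose proof (XY_sq g (c1 0) (c2 0) Hg (nz 0 ltac:(lra))). unfold Xf, Yf. simpl in H. lra. Qed.

Lemma th_inj s t : 0 <= s < 1 -> 0 <= t < 1 -> th s = th t -> s = t.
Proof. intros Hs Ht E. apply pt_inj; auto.
 destruct (XY_rot s ltac:(lra)) as [A B]. destruct (XY_rot t ltac:(lra)) as [C D].
 rewrite A, C, E; auto.
 destruct (XY_rot s ltac:(lra)) as [A B]. destruct (XY_rot t ltac:(lra)) as [C D].
 rewrite B, D, E; auto.
Qed.

Lemma back_to_0 t : 0 < t < 1 -> cos (th t) = 1 -> sin (th t) = 0 -> False.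
Proof. intros Ht C S. assert (t = 0). { apply pt_inj; try lra.
  destruct (XY_rot t ltac:(lra)) as [A B]. rewrite A, C, S; ring.
  destruct (XY_rot t ltac:(lra)) as [A B]. rewrite B, C, S; ring. } lra. Qed.

Lemma cos_th1 : cos (th 1) = 1.
Proof. destruct (XY_rot 1 ltac:(lra)) as [A B].
 assert (E1 : Xf 1 = Xf 0) by (unfold Xf; rewrite H01, H02; auto).
 assert (E2 : Yf 1 = Yf 0) by (unfold Yf; rewrite H01, H02; auto).
 rewrite E1 in A. rewrite E2 in B. pose proof X0Y0.
 transitivity (cos (th 1) * (Xf 0 * Xf 0 + Yf 0 * Yf 0)). rewrite H; ring.
 transitivity (Xf 0 * (Xf 0 * cos (th 1) - Yf 0 * sin (th 1)) + Yf 0 * (Xf 0 * sin (th 1) + Yf 0 * cos (th 1))). ring.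
 rewrite <- A, <- B. auto.
Qed.

Lemma omh_eq t : 0 <= t <= 1 -> omh t = om t.
Proof. intros. unfold omh. rewrite clamp_id; auto. Qed.

Lemma up_pair t : 0 < t < 1 -> 0 < om t -> exists b, t < b < 1 /\ th t < th b.
Proof. intros Ht Ho. rewrite <- omh_eq in Ho by lra.
 assert (L : locally t (fun r => 0 < 1 * omh r)).
 { exact (omhc t _ (loc_pos 1 (omh t) ltac:(lra))). }
 destruct L as [eps Heps]. pose proof (cond_pos eps) as Pe.
 set (b := t + Rmin eps (1-t) / 2). pose proof (Rmin_l eps (1-t)). pose proof (Rmin_r eps (1-t)).
 assert (0 < Rmin eps (1-t)) by (apply Rmin_pos; lra).
 exists b. split. unfold b; lra.
 assert (0 < th b - th t). { rewrite th_diff. apply RInt_gt_0. unfold b; lra.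
   intros x Hx. assert (B : ball t eps x). { change (Rabs (x - t) < eps). rewrite Rabs_right; unfold b in Hx; lra. }
   specialize (Heps x B). lra. intros; apply omhc. }
 lra.
Qed.

Lemma down_pair t : 0 < t < 1 -> om t < 0 -> exists b, t < b < 1 /\ th b < th t.
Proof. intros Ht Ho. rewrite <- omh_eq in Ho by lra.
 assert (L : locally t (fun r => 0 < -1 * omh r)).
 { exact (omhc t _ (loc_pos (-1) (omh t) ltac:(lra))). }
 destruct L as [eps Heps]. pose proof (cond_pos eps) as Pe.
 set (b := t + Rmin eps (1-t) / 2). pose proof (Rmin_l eps (1-t)). pose proof (Rmin_r eps (1-t)).
 assert (0 < Rmin eps (1-t)) by (apply Rmin_pos; lra).
 exists b. split. unfold b; lra.
 assert (0 < th t - th b). { replace (th t - th b) with (-1 * (th b - th t)) by ring.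
   rewrite th_diff. rewrite <- RInt_scalR by apply ex_omh. apply RInt_gt_0. unfold b; lra.
   intros x Hx. assert (B : ball t eps x). { change (Rabs (x - t) < eps). rewrite Rabs_right; unfold b in Hx; lra. }
   specialize (Heps x B). lra. intros; apply cmul. apply cconst. apply omhc. }
 lra.
Qed.

Lemma dich : (forall t, 0 < t < 1 -> 0 <= om t) \/ (forall t, 0 < t < 1 -> om t <= 0).
Proof. destruct (classic (forall t, 0 < t < 1 -> 0 <= om t)) as [A|A]; [left; auto|].
 destruct (classic (forall t, 0 < t < 1 -> om t <= 0)) as [B|B]; [right; auto|]. exfalso.
 apply not_all_ex_not in A. destruct A as [t1 A]. apply imply_to_and in A. destruct A as [T1 A].
 apply not_all_ex_not in B. destruct B as [t2 B]. apply imply_to_and in B. destruct B as [T2 B].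
 destruct (up_pair t2 T2 ltac:(lra)) as [b2 [Hb2 U]].
 destruct (down_pair t1 T1 ltac:(lra)) as [b1 [Hb1 D]].
 assert (I : Inj01 th) by (intros x y Hx Hy E; apply th_inj; auto; lra).
 pose proof (pairs th t2 b2 t1 b1 thc I ltac:(lra) ltac:(lra) ltac:(lra) ltac:(lra)) as P.
 apply P in U. lra.
Qed.

Lemma length_main : is_RInt (fun t => sqrt (gquad g (c1 t) (c2 t) (Derive c1 t) (Derive c2 t))) 0 1 (2*PI/hF g).
Proof.
 destruct exc as (p & q & Hpq). pose proof (hF_pos g Hg) as Hh.
 assert (key : forall e, e*e = 1 -> (forall t, 0 < t < 1 -> 0 <= e * om t) ->
    is_RInt (fun t => sqrt (gquad g (c1 t) (c2 t) (Derive c1 t) (Derive c2 t))) 0 1 (2*PI/hF g)).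
 { intros e He Hpos.
   assert (Ee : e = 1 \/ e = -1) by (apply s_cases; auto).
   assert (Phi : e * th 1 = 2*PI).
   { apply (phi_2pi (fun t => e * th t)).
     - intros; apply cmul. apply cconst. apply thc.
     - rewrite th0; ring.
     - intros a b Ha Hab Hb. assert (0 <= e * (th b - th a)).
       { rewrite th_diff. rewrite <- RInt_scalR by apply ex_omh.
         apply RInt_ge_0; auto. apply exR_cont. intros; apply cmul. apply cconst. apply omhc.
         intros x Hx. rewrite omh_eq by lra. apply Hpos. lra. }
       lra.
     - destruct Ee as [-> | ->]. rewrite Rmult_1_l; apply cos_th1.
       replace (-1 * th 1) with (- th 1) by ring. rewrite cos_neg; apply cos_th1.
     - intros t Ht C S. apply (back_to_0 t Ht).
       destruct Ee as [-> | ->]. rewrite Rmult_1_l in C; auto.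
       replace (-1 * th t) with (- th t) in C by ring. rewrite cos_neg in C; auto.
       destruct Ee as [-> | ->]. rewrite Rmult_1_l in S; auto.
       replace (-1 * th t) with (- th t) in S by ring. rewrite sin_neg in S; lra. }
   pose proof (is_RInt_scalR omh 0 1 (e / hF g) _ (RInt_correctR omh 0 1 (ex_omh 0 1))) as I.
   replace (e / hF g * RInt omh 0 1) with (2 * PI / hF g) in I.
   2: { unfold th in Phi. rewrite <- Phi. field. lra. }
   apply (rint2 _ _ p q 0 1 _ ltac:(lra) I).
   intros x Hx Hp Hq. assert (Hc : c1 x <> 0) by (intro E; destruct (Hpq x Hx E); auto).
   rewrite integrand by auto. rewrite omh_eq by lra.
   assert (Ab : Rabs (om x) = e * om x).
   { rewrite <- (Rabs_right (e * om x)) by (apply Rle_ge, Hpos; auto).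
     rewrite Rabs_mult. destruct Ee as [-> | ->]; rewrite ?Rabs_R1, ?Rabs_m1; ring. }
   rewrite Ab. field. lra. }
 destruct dich as [A|A].
 - apply (key 1). ring. intros; rewrite Rmult_1_l; auto.
 - apply (key (-1)). ring. intros t Ht; specialize (A t Ht); lra.
Qed.
End Curve.

Theorem theorem1p3 :
  (forall g : R, -2 < g < 2 ->
     (forall c1 c2 : R -> R, indicatrix_loop g c1 c2 ->
        finsler_length_is g c1 c2 (2 * PI / hF g)) /\
     2 * PI / hF g >= 2 * PI /\
     (2 * PI / hF g = 2 * PI <-> g = 0)) /\
  filterlim (fun g => 2 * PI / hF g) (at_left 2) (Rbar_locally p_infty) /\
  filterlim (fun g => 2 * PI / hF g) (at_right (-2)) (Rbar_locally p_infty).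
Proof.
  split; [|split; [apply lim_left | apply lim_right]].
  intros g Hg. split; [|split; [apply easy_ineq; auto | apply easy_iff; auto]].
  intros c1 c2 (HD & HK & _ & H01 & H02 & HI).
  unfold finsler_length_is. apply (length_main g c1 c2 Hg HD HK H01 H02 HI).
Qed.
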